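(* Let $R:X\leftrightarrow\mathcal{P}Y$ and $S:Y\leftrightarrow\mathcal{P}Z$ be multirelations. Then (1) $(R\ast S)^{\downarrow}=R\ast S^{\downarrow}$, and hence $(R^{\downarrow}\ast S^{\downarrow})^{\downarrow}=R^{\downarrow}\ast S^{\downarrow}$; (2) if $R$ is inner deterministic, then $(R\ast S)^{\uparrow}=R\ast S^{\uparrow}=R^{\uparrow}\ast S^{\uparrow}$.
   Context: A multirelation $R:X\leftrightarrow\mathcal{P}Y$ is a subset of $X\times\mathcal{P}(Y)$. $R^{\uparrow}=\{(a,A)\mid\exists B.\ (a,B)\in R\wedge B\subseteq A\}$, $R^{\downarrow}=\{(a,A)\mid\exists B.\ (a,B)\in R\wedge A\subseteq B\}$. $R$ is inner deterministic if every $(a,B)\in R$ has $B$ a singleton. The Peleg composition is $R\ast S=\{(a,C)\mid\exists B.\ (a,B)\in R\wedge\exists f:Y\to\mathcal{P}Z.\ (\forall b\in B.\ (b,f(b))\in S)\wedge C=\bigcup_{b\in B}f(b)\}$. *)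

(* Defs.v *)
From mathcomp Require Import all_boot.
From mathcomp Require Import boolp classical_sets.
Set Implicit Arguments. Unset Strict Implicit. Unset Printing Implicit Defensive.
Local Open Scope classical_set_scope.

Definition multirel (X Y : Type) := set (X * set Y).

Definition up_close X Y (R : multirel X Y) : multirel X Y :=
  [set p | exists B, R (p.1, B) /\ B `<=` p.2].

Definition down_close X Y (R : multirel X Y) : multirel X Y :=
  [set p | exists B, R (p.1, B) /\ p.2 `<=` B].

Definition inner_det X Y (R : multirel X Y) : Prop :=
  forall a B, R (a, B) -> exists b, B = [set b].

Definition peleg X Y Z (R : multirel X Y) (S : multirel Y Z) : multirel X Z :=
  [set p | exists B, R (p.1, B) /\
     exists f : Y -> set Z, (forall b, B b -> S (b, f b)) /\
                            p.2 = \bigcup_(b in B) f b].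

(* Main.v *)
Require Import Defs.
From mathcomp Require Import all_boot.
From mathcomp Require Import boolp classical_sets.
Local Open Scope classical_set_scope.

Lemma down1 (X Y Z : Type) (R : multirel X Y) (S : multirel Y Z) :
  down_close (peleg R S) = peleg R (down_close S).
Proof.
apply/seteqP; split => -[a C] /=.
- move=> [D [[B [RB [f [Sf HD]]]] CD]]; simpl in *; subst.
  exists B; split => //.
  exists (fun b => f b `&` C); split.
    move=> b Bb; exists (f b); split; [exact: Sf | by move=> z []].
  apply/seteqP; split.
    move=> z Cz; have [b Bb fbz] := CD z Cz; by exists b.
  by move=> z [b _ []].
- move=> [B [RB [g [Sg HC]]]]; simpl in *; subst.
  have /choice [F HF] : forall b, exists F, B b -> S (b, F) /\ g b `<=` F.
    move=> b.
    have [Bb|nBb] := pselect (B b).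
      have [F [SF gF]] := Sg b Bb; by exists F.
    by exists set0.
  exists (\bigcup_(b in B) F b); split.
    exists B; split => //; exists F; split => //.
    by move=> b Bb; case: (HF b Bb).
  move=> z [b Bb gz]; exists b => //; by case: (HF b Bb) => _; apply.
Qed.

Lemma downK (X Y : Type) (S : multirel X Y) : down_close (down_close S) = down_close S.
Proof.
apply/seteqP; split => -[a C] /=.
- move=> [D [[E [SE DE]] CD]]; exists E; split => //; exact: subset_trans CD DE.
- move=> [E [SE CE]]; exists C; split => //; by exists E.
Qed.

Lemma upsub (X Y : Type) (R : multirel X Y) : R `<=` up_close R.
Proof. move=> [a B] RB /=; exists B; split => // z; exact. Qed.

Theorem lemma4p8 (X Y Z : Type) (R : multirel X Y) (S : multirel Y Z) :
  (down_close (peleg R S) = peleg R (down_close S) /\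
   down_close (peleg (down_close R) (down_close S))
     = peleg (down_close R) (down_close S)) /\
  (inner_det R ->
     up_close (peleg R S) = peleg R (up_close S) /\
     peleg R (up_close S) = peleg (up_close R) (up_close S)).
Proof.
split.
  split; first exact: down1.
  by rewrite down1 downK.
move=> Hdet; split.
- apply/seteqP; split => -[a C] /=.
  + move=> [D [[B [RB [f [Sf HD]]]] DC]]; simpl in *; subst.
    have [b0 HB] := Hdet _ _ RB; subst B.
    exists [set b0]; split => //; exists (fun _ => C); split.
      move=> b /= ->; exists (f b0); split; first exact: Sf.
      by move: DC; rewrite bigcup_set1.
    by rewrite bigcup_set1.
  + move=> [B [RB [g [Sg HC]]]]; simpl in *; subst.
    have [b0 HB] := Hdet _ _ RB; subst B.
    have [F [SF Fg]] := Sg b0 erefl.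
    exists F; split; last by rewrite bigcup_set1.
    exists [set b0]; split => //; exists (fun _ => F); split.
      by move=> b /= ->.
    by rewrite /= bigcup_set1.
- apply/seteqP; split => -[a C] /=.
  + move=> [B [RB [g [Sg HC]]]]; simpl in *; subst; exists B; split; first by exists B; split => // z.
    by exists g.
  + move=> [A [[B [RB BA]] [g [Sg HC]]]]; simpl in *; subst.
    have [b0 HB] := Hdet _ _ RB; subst B.
    have Ab0 : A b0 by apply: BA.
    exists [set b0]; split => //.
    exists (fun _ => \bigcup_(b in A) g b); split; last by rewrite bigcup_set1.
    move=> b /= ->.
    have [F [SF Fg]] := Sg b0 Ab0.
    exists F; split => //.
    move=> z Fz; exists b0 => //; exact: Fg.
Qed.
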